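(* Let $\{X_\gamma\}_{\gamma\in\Gamma}$ be a family of strictly convex real Banach spaces with $\dim(X_\gamma)\geq 2$ for every $\gamma\in\Gamma$, and let $Z_\infty=\bigoplus^{\ell_\infty}_{\gamma\in\Gamma}X_\gamma$. Then every element $z\in B_{Z_\infty}$ can be written as $z=\frac12(x+y)$ with $x,y$ extreme points of $B_{Z_\infty}$.
   Context: All Banach spaces are real. $Z_\infty=\bigoplus^{\ell_\infty}_{\gamma\in\Gamma}X_\gamma$ is the space of families $z=(z(\gamma))_{\gamma\in\Gamma}$ with $z(\gamma)\in X_\gamma$ and $\|z\|=\sup_\gamma\|z(\gamma)\|<\infty$; $B_{Z_\infty}$ is its closed unit ball. A Banach space is strictly convex if every point of its unit sphere is an extreme point of its closed unit ball. *)

(* Defs.v *)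
From HB Require Import structures.
From mathcomp Require Import all_boot all_order all_algebra.
From mathcomp Require Import all_classical all_reals topology normedtype.
Set Implicit Arguments. Unset Strict Implicit. Unset Printing Implicit Defensive.
Import Order.TTheory GRing.Theory Num.Theory.
Import numFieldNormedType.Exports.
Local Open Scope classical_set_scope.
Local Open Scope ring_scope.

Definition unit_ball {R : realType} (V : normedModType R) : set V :=
  [set x : V | `|x| <= 1].

Definition extreme_point {R : realType} (V : lmodType R) (A : set V) (x : V) :=
  A x /\ forall (u v : V) (t : R), A u -> A v -> 0 < t < 1 ->
    x = t *: u + (1 - t) *: v -> u = v.

Definition strictly_convex {R : realType} (V : normedModType R) :=
  forall x : V, `|x| = 1 -> extreme_point (@unit_ball R V) x.

Definition dim_ge2 {R : realType} (V : lmodType R) :=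
  exists x y : V, forall a b : R, a *: x + b *: y = 0 -> a = 0 /\ b = 0.

(* closed unit ball of Z_infty = l_infty-sum of the X g:
   families z with sup_g |z g| <= 1, i.e. |z g| <= 1 for all g *)
Definition Zinf_ball {R : realType} (G : Type) (X : G -> normedModType R) :
  set (forall g, X g) := [set z | forall g, `|z g| <= 1].

Definition Zinf_extreme {R : realType} (G : Type) (X : G -> normedModType R)
  (z : forall g, X g) :=
  @Zinf_ball R G X z /\ forall (u v : forall g, X g) (t : R),
    @Zinf_ball R G X u -> @Zinf_ball R G X v -> 0 < t < 1 ->
    (forall g, z g = t *: u g + (1 - t) *: v g) -> u = v.

(* Main.v *)
Require Import Defs.
From HB Require Import structures.
From mathcomp Require Import all_boot all_order all_algebra.
From mathcomp Require Import all_classical all_reals topology normedtype.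
From mathcomp Require Import lra.
Import Order.TTheory GRing.Theory Num.Theory.
Import numFieldNormedType.Exports.
Local Open Scope classical_set_scope.
Local Open Scope ring_scope.
Lemma find_indep {R : realType} {V : lmodType R} (hd : dim_ge2 V) (w : V) :
  w != 0 -> exists v : V, forall a b : R, a *: w + b *: v = 0 -> a = 0 /\ b = 0.
Proof.
move=> w0; case: hd => x [y hxy].
have x0 : x != 0.
  apply/eqP => x0; have := hxy 1 0; rewrite x0 scaler0 scale0r addr0.
  by move=> /(_ erefl) [/eqP]; rewrite oner_eq0.
have y0 : y != 0.
  apply/eqP => y0; have := hxy 0 1; rewrite y0 scaler0 scale0r addr0.
  by move=> /(_ erefl) [_ /eqP]; rewrite oner_eq0.
case: (pselect (forall a b : R, a *: w + b *: x = 0 -> a = 0 /\ b = 0)) => Hx.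
  by exists x.
case: (pselect (forall a b : R, a *: w + b *: y = 0 -> a = 0 /\ b = 0)) => Hy.
  by exists y.
exfalso.
move/existsNP: Hx => [a /existsNP [b /not_implyP [e1 n1]]].
move/existsNP: Hy => [a' /existsNP [b' /not_implyP [e2 n2]]].
have a0 : a != 0.
  apply/eqP => a0; apply: n1; split => //; move: e1; rewrite a0 scale0r add0r.
  by move/eqP; rewrite scaler_eq0 (negPf x0) orbF => /eqP.
have a'0 : a' != 0.
  apply/eqP => a1; apply: n2; split => //; move: e2; rewrite a1 scale0r add0r.
  by move/eqP; rewrite scaler_eq0 (negPf y0) orbF => /eqP.
have : (a' * b) *: x + (- (a * b')) *: y = 0.
  have -> : (a' * b) *: x + (- (a * b')) *: y
     = a' *: (a *: w + b *: x) - a *: (a' *: w + b' *: y).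
    rewrite !scalerDr !scalerA [a' * a]mulrC opprD addrACA subrr add0r.
    by rewrite scaleNr.
  by rewrite e1 e2 !scaler0 subrr.
move/hxy => [/eqP h1 /eqP h2].
move: h1 h2; rewrite oppr_eq0 !mulf_eq0 (negPf a0) (negPf a'0) /= => /eqP b0 /eqP b'0.
move: e1; rewrite b0 scale0r addr0 => /eqP; rewrite scaler_eq0 (negPf a0) /=.
by move/eqP => w0'; rewrite w0' eqxx in w0.
Qed.
Lemma cont_lin (R : realType) (V : normedModType R) (a b : R -> R) (u v : V) :
  continuous a -> continuous b -> continuous (fun t => a t *: u + b t *: v).
Proof.
move=> ca cb t.
apply: (@continuousD _ _ _ (fun t => a t *: u) (fun t => b t *: v)).
  apply: continuousZr_tmp; exact: ca.
apply: continuousZr_tmp; exact: cb.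
Qed.
Lemma cont_a (R : realType) : continuous (fun t : R => 1 - 2 * t).
Proof.
move=> t; apply: cvgB; first exact: cvg_cst.
by apply: cvgM; [exact: cvg_cst | exact: cvg_id].
Qed.
Lemma cont_b (R : realType) : continuous (fun t : R => t - t ^+ 2).
Proof.
move=> t; apply: cvgB; first exact: cvg_id.
rewrite expr2; apply: cvgM; exact: cvg_id.
Qed.
Lemma decomp (R : realType) (V : normedModType R) (hd : dim_ge2 V) (w : V) :
  `|w| <= 1 -> exists x y : V, `|x| = 1 /\ `|y| = 1 /\ w = 2^-1 *: (x + y).
Proof.
move=> w1.
have unit : forall u : V, u != 0 -> `| `|u|^-1 *: u| = 1.
  move=> u u0; rewrite normrZ normfV normr_id mulVf //.
  by rewrite normr_eq0.
have [w0|w0] := eqVneq w 0.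
  case: hd => x [y hxy].
  have x0 : x != 0.
    apply/eqP => x0; have := hxy 1 0; rewrite x0 scaler0 scale0r addr0.
    by move=> /(_ erefl) [/eqP]; rewrite oner_eq0.
  exists (`|x|^-1 *: x), (- (`|x|^-1 *: x)); split; first exact: unit.
  split; first by rewrite normrN unit.
  by rewrite subrr scaler0.
have [v hv] := @find_indep _ _ hd w w0.
pose q (t : R) := (1 - 2 * t) *: w + (t - t ^+ 2) *: v.
have hq : forall t, q t != 0.
  move=> t; apply/eqP => /hv [h1 h2].
  by move: h2; rewrite expr2; nra.
pose p t := `|q t|^-1 *: q t.
have hp : forall t, `|p t| = 1 by move=> t; exact: unit.
pose f t := `|2 *: w - p t|.
have cq : continuous q by exact: cont_lin (cont_a R) (cont_b R).
have cf : continuous f.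
  move=> t; apply: cvg_norm.
  apply: cvgB; first exact: cvg_cst.
  apply: cvgZ; last exact: cq.
  apply: cvgV; first by rewrite normr_eq0 hq.
  exact: cvg_norm (cq t).
have nw : 0 < `|w| by rewrite normr_gt0.
have f0 : f 0 <= 1.
  rewrite /f /p /q /= mulr0 subr0 expr2 mulr0 subrr scale0r addr0 scale1r.
  rewrite -scalerBl normrZ.
  rewrite -[X in _ * X]ger0_norm ?normr_ge0 // -normrM.
  have -> : (2 - `|w|^-1) * `|w| = 2 * `|w| - 1.
    by rewrite mulrBl mulVf ?normr_eq0 //.
  rewrite ler_norml; lra.
have f1 : 1 <= f 1.
  rewrite /f /p /q /= mulr1 expr1n subrr scale0r addr0.
  have -> : (1 - 2 : R) = -1 by lra.
  rewrite scaleN1r normrN scalerN opprK.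
  rewrite -scalerDl normrZ.
  rewrite -[X in _ * X]ger0_norm ?normr_ge0 // -normrM.
  have -> : (2 + `|w|^-1) * `|w| = 2 * `|w| + 1.
    by rewrite mulrDl mulVf ?normr_eq0 //.
  rewrite ger0_norm; lra.
have [c _ fc] : exists2 c, c \in `[0, 1] & f c = 1.
  apply: IVT => //; first exact: continuous_subspaceT.
  rewrite ge_min le_max f0 f1 orbT //.
exists (p c), (2 *: w - p c); split => //; split => //.
rewrite addrC subrK scalerA mulVf ?scale1r // pnatr_eq0 //=.
Qed.
Lemma extreme_of (R : realType) (G : Type) (X : G -> normedModType R)
  (hsc : forall g, strictly_convex (X g)) (x : forall g, X g) :
  (forall g, `|x g| = 1) -> @Zinf_extreme R G X x.
Proof.
move=> hx; split; first by move=> g; rewrite hx.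
move=> u v t hu hv ht hxe; apply: functional_extensionality_dep => g.
have [_ H] := hsc g (x g) (hx g).
exact: (H (u g) (v g) t (hu g) (hv g) ht (hxe g)).
Qed.

Theorem proposition2p5 (R : realType) (G : Type)
  (X : G -> completeNormedModType R)
  (hsc : forall g, strictly_convex (X g))
  (hdim : forall g, dim_ge2 (X g)) :
  forall z : (forall g, X g), @Zinf_ball R G X z ->
    exists x y : (forall g, X g),
      @Zinf_extreme R G X x /\ @Zinf_extreme R G X y /\
      forall g, z g = 2^-1 *: (x g + y g).
Proof.
move=> z hz.
have H : forall g, { xy : X g * X g | `|xy.1| = 1 /\ `|xy.2| = 1 /\ z g = 2^-1 *: (xy.1 + xy.2) }.
  move=> g; apply: cid.
  have [x [y [h1 [h2 h3]]]] := @decomp R (X g) (hdim g) (z g) (hz g).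
  by exists (x, y).
exists (fun g => (sval (H g)).1), (fun g => (sval (H g)).2).
split; first by apply: extreme_of => // g; case: (svalP (H g)).
split; first by apply: extreme_of => // g; case: (svalP (H g)) => _ [].
by move=> g; case: (svalP (H g)) => _ [].
Qed.
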